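(* Let $K$ be a positive commutative semiring with its natural (pre)order. Let $C$ be a collection of $\mathrm{FO}(=,\neq\!\bot,\leq)$-definable atoms and $D$ a collection of $\mathrm{FO}(\bot?,\neq,\not\leq)$-definable atoms. Let $\phi\in\mathrm{FO}(C)$ and $\psi\in\mathrm{FO}(D)$. Let $\mathfrak A$ be a first-order $\tau$-structure with finite domain $A$, let $\mathbb{X}$ be a $K$-team of $\mathfrak A$, and let $X=\chi_K\circ\mathbb{X}$ be its possibilistic collapse. Then: (i) $\mathfrak A\models_{\mathbb{X}}\phi$ (in $K$-team semantics) implies $\mathfrak A\models_{X}\phi$ (in $\mathbb{B}$-team semantics); (ii) if moreover $K$ is $+$-dense, then $\mathfrak A\models_{X}\psi$ implies $\mathfrak A\models_{\mathbb{X}}\psi$.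
   Context: Commutative semiring $(K,+,\cdot,0,1)$. It is positive if $a+b=0$ implies $a=b=0$, and $ab=0$ implies $a=0$ or $b=0$. It is $+$-dense if every nonzero $a$ equals $b+c$ for some nonzero $b,c$. The natural order is $a\leq b$ iff $\exists c:a+c=b$. $\mathbb{B}=(\{0,1\},\vee,\wedge,0,1)$. $\chi_K\colon K\to\mathbb{B}$ maps $0$ to $0$ and nonzero elements to $1$. $K$-teams: $\mathrm{As}(V,A)$ is the set of assignments $V\to A$ for a finite variable set $V$. A $K$-team is $\mathbb{X}\colon\mathrm{As}(V,A)\to K$, with support $\mathrm{Sup}(\mathbb{X})=\{s:\mathbb{X}(s)\neq0\}$. Its possibilistic collapse is the $\mathbb{B}$-team $\chi_K\circ\mathbb{X}$. Fix a total order on variables, $V=\{x_1<\dots<x_k\}$, and put $\vec a_s=(s(x_1),\dots,s(x_k))$. $\pi_{\mathfrak A,\mathbb{X}}$ is the $K$-interpretation over $A$ for the vocabulary $\tau\cup\{R\}$, $R$ fresh of arity $k$, given by: - $\tau$-facts true in $\mathfrak A$ get $1$, false ones get $0$, and their negations get the opposite value; - $R(\vec a_s)\mapsto\mathbb{X}(s)$; - $\neg R(\vec a_s)\mapsto1$ if $\mathbb{X}(s)=0$, and $0$ otherwise. A $K$-interpretation is extended to formulae under assignments as follows: - literals get their $\pi$-values; - $x=y$ and $x\neq y$ get $1$ or $0$ according to their truth; - $\wedge$ is product and $\vee$ is sum; - $\forall$ is the product and $\exists$ the sum over $A$; - $\neg$ is evaluated via negation normal form. A formula (in)equality $\phi*\psi$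 has value $1$ if $[\![\phi]\!]*[\![\psi]\!]$ holds in the semiring, and $0$ otherwise. $\bot$ is a formula of constant value $0$. An atom $\alpha$ comes with, for each finite ordered domain $V$ containing its variables, a defining sentence $\phi_{\alpha,V}$ over $\tau\cup\{R\}$. Examples are dependence, independence and inclusion atoms, defined by sentences such as $\forall\vec u(\theta_{\vec i}(\vec u)\leq\theta_{\vec j}(\vec u))$ with $\theta_{\vec i}(\vec u)=\exists\vec x(R(\vec x)\wedge\vec x_{\vec i}=\vec u)$. It is $\mathcal L$-definable if all $\phi_{\alpha,V}\in\mathcal L$. $\mathrm{FO}(=,\neq\!\bot,\leq)$ (resp. $\mathrm{FO}(\bot?,\neq,\not\leq)$) consists of formulae built from first-order literals and formula (in)equalities of the forms $\phi=\psi$, $\phi\neq\bot$, $\phi\leq\psi$ (resp. $\phi=\bot$, $\phi\neq\psi$, $\phi\not\leq\psi$) between first-order formulae, using $\wedge,\vee,\forall,\exists$. $\mathrm{FO}(C)$ is negation-normal-form first-order logic over $\tau$ extended with (unnegated) atoms from $C$. $K$-team semantics for a $K$-team $\mathbb{X}$ with domain $V$ (quantified variables assumed not in the current domain): - $\mathfrak A\models_{\mathbb{X}}l$ for a first-order literal $l$ iff $\mathfrak A\models_s l$ for all $s\in\mathrm{Sup}(\mathbb{X})$; - $\mathfrak A\models_{\mathbb{X}}\alpha$ for an atom iff $[\![\phi_{\alpha,V}]\!]_{\pi_{\mathfrak A,\mathbb{X}}}\neq0$; - $\wedge$ is conjunction; - $\mathfrak A\models_{\mathbb{X}}\psi\vee\theta$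 iff $\mathfrak A\models_{\mathbb{Y}}\psi$ and $\mathfrak A\models_{\mathbb{Z}}\theta$ for some $\mathbb{Y},\mathbb{Z}$ with $\mathbb{Y}(s)+\mathbb{Z}(s)=\mathbb{X}(s)$ for all $s$; - $\mathfrak A\models_{\mathbb{X}}\forall x\psi$ iff $\mathfrak A\models_{\mathbb{Y}}\psi$ where $\mathbb{Y}(s[a/x])=\mathbb{X}(s)$ for all $s$ and all $a\in A$; - $\mathfrak A\models_{\mathbb{X}}\exists x\psi$ iff $\mathfrak A\models_{\mathbb{Y}}\psi$ for some $\mathbb{Y}$ with $\mathbb{X}(s)=\sum_{a\in A}\mathbb{Y}(s[a/x])$ for all $s$. For $K=\mathbb{B}$ this is standard team semantics. *)

(* Defs.v *)
From HB Require Import structures.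
From mathcomp Require Import all_boot all_order all_algebra.
From Stdlib Require Import ClassicalEpsilon.
Set Implicit Arguments. Unset Strict Implicit. Unset Printing Implicit Defensive.
Import GRing.Theory.
Local Open Scope ring_scope.

Definition positive_sr (K : comNzSemiRingType) : Prop :=
  (forall a b : K, a + b = 0 -> a = 0 /\ b = 0) /\
  (forall a b : K, a * b = 0 -> a = 0 \/ b = 0).

Definition plus_dense (K : comNzSemiRingType) : Prop :=
  forall a : K, a != 0 -> exists b c : K, b != 0 /\ c != 0 /\ a = b + c.

Definition nat_le (K : comNzSemiRingType) (a b : K) : Prop :=
  exists c, a + c = b.

Definition boolsr : Type := bool.
HB.instance Definition _ := Choice.on boolsr.
Lemma boolsr_addA : associative (orb : boolsr -> boolsr -> boolsr).
Proof. by move=> [] [] []. Qed.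
Lemma boolsr_addC : commutative (orb : boolsr -> boolsr -> boolsr).
Proof. by move=> [] []. Qed.
Lemma boolsr_add0 : left_id (false : boolsr) orb.
Proof. by move=> []. Qed.
HB.instance Definition _ :=
  GRing.isNmodule.Build boolsr boolsr_addA boolsr_addC boolsr_add0.
Lemma boolsr_mulA : associative (andb : boolsr -> boolsr -> boolsr).
Proof. by move=> [] [] []. Qed.
Lemma boolsr_mulC : commutative (andb : boolsr -> boolsr -> boolsr).
Proof. by move=> [] []. Qed.
Lemma boolsr_mul1 : left_id (true : boolsr) andb.
Proof. by move=> []. Qed.
Lemma boolsr_mulDl : left_distributive (andb : boolsr -> boolsr -> boolsr) orb.
Proof. by move=> [] [] []. Qed.
Lemma boolsr_mul0 : left_zero (false : boolsr) andb.
Proof. by move=> []. Qed.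
Lemma boolsr_1n0 : (true : boolsr) != false.
Proof. by []. Qed.
HB.instance Definition _ :=
  GRing.Nmodule_isComNzSemiRing.Build boolsr boolsr_mulA boolsr_mulC boolsr_mul1
    boolsr_mulDl boolsr_mul0 boolsr_1n0.

Definition chiK (K : comNzSemiRingType) (a : K) : boolsr := (a != 0).

Definition pdec (P : Prop) : bool :=
  if excluded_middle_informative P then true else false.

(* Variables are natural numbers, totally ordered by <.  A finite ordered
   variable domain V = {x1 < ... < xk} is a strictly increasing seq nat;
   an assignment s : V -> A is the k-tuple (s(x1),...,s(xk)) = vec a_s. *)

Definition assign (A : Type) (V : seq nat) := (size V).-tuple A.

Definition lk (A : Type) (V : seq nat) (s : seq A) (y : nat) : option A :=
  onth s (index y V).

Definition ins (x : nat) (V : seq nat) : seq nat :=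
  [seq y <- V | (y < x)%N] ++ x :: [seq y <- V | (x < y)%N].

Definition ext (A : Type) (x : nat) (V : seq nat) (s : assign A V) (a : A)
  : assign A (ins x V) :=
  map_tuple (fun y => if y == x then a else nth a s (index y V)) (in_tuple (ins x V)).

(* sym/ar : a relational vocabulary tau; k : arity of the fresh symbol R. *)

Inductive cmpop := CEq | CNeq | CLe | CNle.

Definition negop (o : cmpop) : cmpop :=
  match o with CEq => CNeq | CNeq => CEq | CLe => CNle | CNle => CLe end.

Section KForm.
Variables (sym : Type) (ar : sym -> nat) (k : nat).

Inductive kform : Type :=
| KRel (r : sym) (xs : (ar r).-tuple nat) (pos : bool)
| KR (xs : k.-tuple nat) (pos : bool)
| KEq (x y : nat) (pos : bool)
| KBot
| KNot (f : kform)
| KAnd (f g : kform)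
| KOr (f g : kform)
| KAll (x : nat) (f : kform)
| KEx (x : nat) (f : kform)
| KCmp (o : cmpop) (f g : kform).                         (* formula (in)equality *)

Fixpoint is_fo (f : kform) : bool :=
  match f with
  | KRel _ _ _ | KR _ _ | KEq _ _ _ => true
  | KBot | KCmp _ _ _ => false
  | KNot g | KAll _ g | KEx _ g => is_fo g
  | KAnd g h | KOr g h => is_fo g && is_fo h
  end.

Fixpoint in_frag (okcmp : cmpop -> kform -> kform -> bool) (f : kform) : bool :=
  match f with
  | KRel _ _ _ | KR _ _ | KEq _ _ _ => true
  | KBot | KNot _ => false
  | KAnd g h | KOr g h => in_frag okcmp g && in_frag okcmp h
  | KAll _ g | KEx _ g => in_frag okcmp g
  | KCmp o g h => okcmp o g h
  end.

Definition is_bot (f : kform) : bool := if f is KBot then true else false.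

Definition ok1 (o : cmpop) (g h : kform) : bool :=
  match o with
  | CEq => is_fo g && is_fo h
  | CNeq => is_fo g && is_bot h
  | CLe => is_fo g && is_fo h
  | CNle => false
  end.

Definition ok2 (o : cmpop) (g h : kform) : bool :=
  match o with
  | CEq => is_fo g && is_bot h
  | CNeq => is_fo g && is_fo h
  | CNle => is_fo g && is_fo h
  | CLe => false
  end.

Definition frag1 := in_frag ok1.
Definition frag2 := in_frag ok2.

End KForm.

Section KEval.
Variables (sym : Type) (ar : sym -> nat) (A : finType)
          (rel : forall r : sym, (ar r).-tuple A -> bool)
          (K : comNzSemiRingType) (k : nat) (X : k.-tuple A -> K).

Definition env := nat -> option A.

Definition upd (e : env) (x : nat) (a : A) : env :=
  fun y => if y == x then Some a else e y.

Definition vals n (e : env) (xs : n.-tuple nat) : option (n.-tuple A) :=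
  insub (pmap id (map e xs)).

Definition holdsK (o : cmpop) (a b : K) : Prop :=
  match o with
  | CEq => a = b
  | CNeq => a <> b
  | CLe => nat_le a b
  | CNle => ~ nat_le a b
  end.

Definition b2K (b : bool) : K := if b then 1 else 0.

(* [[f]] under env e; pol = false means f occurs negated (NNF evaluation) *)
Fixpoint keval (pol : bool) (f : kform ar k) (e : env) : K :=
  match f with
  | KRel r xs p =>
      if vals e xs is Some t then b2K (rel t == (p == pol)) else 0
  | KR xs p =>
      if vals e xs is Some t then
        (if p == pol then X t else b2K (X t == 0))
      else 0
  | KEq x y p =>
      match e x, e y with
      | Some a, Some b => b2K ((a == b) == (p == pol))
      | _, _ => 0
      end
  | KBot => b2K (~~ pol)
  | KNot g => keval (~~ pol) g e
  | KAnd g h => if pol then keval pol g e * keval pol h e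
                else keval pol g e + keval pol h e
  | KOr g h => if pol then keval pol g e + keval pol h e
               else keval pol g e * keval pol h e
  | KAll x g => if pol then \prod_(a : A) keval pol g (upd e x a)
                else \sum_(a : A) keval pol g (upd e x a)
  | KEx x g => if pol then \sum_(a : A) keval pol g (upd e x a)
               else \prod_(a : A) keval pol g (upd e x a)
  | KCmp o g h =>
      b2K (pdec (holdsK (if pol then o else negop o)
                        (keval true g e) (keval true h e)))
  end.

Definition sent_val (f : kform ar k) : K := keval true f (fun _ => None).

End KEval.

Section Team.
Variables (sym : Type) (ar : sym -> nat) (At : Type).

Inductive tform : Type :=
| TRel (r : sym) (xs : (ar r).-tuple nat) (pos : bool)
| TEq (x y : nat) (pos : bool)
| TAtom (a : At)
| TAnd (f g : tform)
| TOr (f g : tform)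
| TAll (x : nat) (f : tform)
| TEx (x : nat) (f : tform).

Fixpoint atoms_in (C : At -> Prop) (f : tform) : Prop :=
  match f with
  | TRel _ _ _ | TEq _ _ _ => True
  | TAtom a => C a
  | TAnd g h | TOr g h => atoms_in C g /\ atoms_in C h
  | TAll _ g | TEx _ g => atoms_in C g
  end.

Variable avars : At -> seq nat.

Fixpoint wf (V : seq nat) (f : tform) : Prop :=
  match f with
  | TRel r xs _ => forall i, tnth xs i \in V
  | TEq x y _ => x \in V /\ y \in V
  | TAtom a => {subset avars a <= V}
  | TAnd g h | TOr g h => wf V g /\ wf V h
  | TAll x g | TEx x g => x \notin V /\ wf (ins x V) g
  end.

(* an atom has, for every finite ordered domain V containing its
   variables, a defining sentence adef a V over tau u {R}, R of arity |V| *)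
Variable adef : At -> forall V : seq nat, kform ar (size V).

Definition definable (L : forall k, kform ar k -> bool) (a : At) : Prop :=
  forall V : seq nat, sorted ltn V -> {subset avars a <= V} -> L _ (adef a V).

Variables (A : finType) (rel : forall r : sym, (ar r).-tuple A -> bool).

Definition lit_rel (V : seq nat) (s : assign A V) r (xs : (ar r).-tuple nat)
  (pos : bool) : Prop :=
  exists t : (ar r).-tuple A,
    (forall i, lk V s (tnth xs i) = Some (tnth t i)) /\ rel t = pos.

Definition lit_eq (V : seq nat) (s : assign A V) (x y : nat) (pos : bool) : Prop :=
  exists a b, lk V s x = Some a /\ lk V s y = Some b /\ (a == b) = pos.

Fixpoint tsat (K : comNzSemiRingType) (f : tform) :
  forall V : seq nat, (assign A V -> K) -> Prop :=
  match f with
  | TRel r xs p => fun V X => forall s, X s != 0 -> lit_rel s xs p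
  | TEq x y p => fun V X => forall s, X s != 0 -> lit_eq s x y p
  | TAtom a => fun V X => sent_val rel X (adef a V) != 0
  | TAnd g h => fun V X => tsat g X /\ tsat h X
  | TOr g h => fun V X =>
      exists Y Z : assign A V -> K,
        (forall s, Y s + Z s = X s) /\ tsat g Y /\ tsat h Z
  | TAll x g => fun V X =>
      exists Y : assign A (ins x V) -> K,
        (forall s a, Y (ext x s a) = X s) /\ tsat g Y
  | TEx x g => fun V X =>
      exists Y : assign A (ins x V) -> K,
        (forall s, X s = \sum_(a : A) Y (ext x s a)) /\ tsat g Y
  end.

End Team.

Definition collapse (A : Type) (V : seq nat) (K : comNzSemiRingType)
  (X : assign A V -> K) : assign A V -> boolsr :=
  fun s => chiK (X s).

(* Main.v *)
Require Import Defs.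
From HB Require Import structures.
From mathcomp Require Import all_boot all_order all_algebra.
From Stdlib Require Import ClassicalEpsilon FunctionalExtensionality.
Set Implicit Arguments. Unset Strict Implicit. Unset Printing Implicit Defensive.

Lemma ins_sorted x V : sorted ltn V -> sorted ltn (ins x V).
Proof.
move=> sV; rewrite sorted_pairwise; last exact: ltn_trans.
rewrite /ins pairwise_cat pairwise_cons.
have sV1 := sorted_filter ltn_trans (fun y => y < x) sV.
have sV2 := sorted_filter ltn_trans (fun y => x < y) sV.
rewrite -!sorted_pairwise; try exact: ltn_trans.
rewrite sV1 sV2 andbT.
apply/andP; split; last by apply/allP => y; rewrite mem_filter => /andP[].
apply/allrelP => y z; rewrite mem_filter => /andP[yx _].
rewrite inE mem_filter => /orP[/eqP->//|/andP[xz _]].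
exact: ltn_trans yx xz.
Qed.

Lemma ins_uniq x V : sorted ltn V -> uniq (ins x V).
Proof. by move=> /(ins_sorted x)/(sorted_uniq ltn_trans ltnn). Qed.

Lemma mem_insx x V : x \in ins x V.
Proof. by rewrite /ins mem_cat inE eqxx orbT. Qed.

Lemma mem_insV x V y : y \in V -> y != x -> y \in ins x V.
Proof.
move=> yV yx; rewrite /ins mem_cat inE !mem_filter yV !andbT (negbTE yx) /=.
by case: ltngtP yx => //; rewrite eqxx.
Qed.

Lemma mem_ins_inv x V y : y \in ins x V -> y != x -> y \in V.
Proof.
rewrite /ins mem_cat inE !mem_filter => /orP[/andP[_ ->]//|/orP[/eqP->|/andP[_ ->]//]].
by rewrite eqxx.
Qed.

Lemma ins_idx x V : (index x (ins x V) < size (ins x V))%N.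
Proof. by rewrite index_mem mem_insx. Qed.

Section Proj.
Variables (A : Type) (x : nat) (V : seq nat).

Definition a_of (t : assign A (ins x V)) : A := tnth t (Ordinal (ins_idx x V)).

Definition proj (t : assign A (ins x V)) : assign A V :=
  map_tuple (fun y => nth (a_of t) t (index y (ins x V))) (in_tuple V).

Hypothesis sV : sorted ltn V.
Hypothesis xV : x \notin V.

Lemma nth_ext (s : assign A V) a d y : y \in ins x V ->
  nth d (ext x s a) (index y (ins x V)) = if y == x then a else nth a s (index y V).
Proof.
move=> yi; rewrite /ext /= (nth_map 0); last by rewrite index_mem.
by rewrite nth_index.
Qed.

Lemma a_of_ext (s : assign A V) a : a_of (ext x s a) = a.
Proof. by rewrite /a_of (tnth_nth a) nth_ext ?mem_insx // eqxx. Qed.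

Lemma proj_ext (s : assign A V) a : proj (ext x s a) = s.
Proof.
apply/val_inj; rewrite /= a_of_ext.
have uV : uniq V := sorted_uniq ltn_trans ltnn sV.
apply: (@eq_from_nth _ a); first by rewrite size_map size_tuple.
move=> i; rewrite size_map => iV.
rewrite (nth_map 0) // nth_ext ?mem_insV ?mem_nth //; last first.
  by apply/eqP => e; move: xV; rewrite -e mem_nth.
have -> : (nth 0 V i == x) = false.
  by apply/negbTE/eqP => e; move: xV; rewrite -e mem_nth.
by rewrite index_uniq.
Qed.

Lemma ext_proj (t : assign A (ins x V)) : ext x (proj t) (a_of t) = t.
Proof.
apply/val_inj; rewrite /=.
have ui := ins_uniq x sV.
apply: (@eq_from_nth _ (a_of t)); first by rewrite size_map size_tuple.
move=> i; rewrite size_map => ii.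
rewrite (nth_map 0) //.
have yi : nth 0 (ins x V) i \in ins x V by rewrite mem_nth.
case: eqP => [e|/eqP ne].
  have := index_uniq 0 ii ui; rewrite e => H.
  by rewrite {1}/a_of (tnth_nth (a_of t)) /= H.
have yV := mem_ins_inv yi ne.
rewrite /proj /= (nth_map 0) ?index_mem // nth_index //.
by rewrite index_uniq.
Qed.
End Proj.
Import GRing.Theory.
Local Open Scope ring_scope.

Lemma addbsrE (u v : boolsr) : u + v = u || v. Proof. by []. Qed.
Lemma mulbsrE (u v : boolsr) : u * v = u && v. Proof. by []. Qed.
Lemma zerobsrE : (0 : boolsr) = false. Proof. by []. Qed.
Lemma onebsrE : (1 : boolsr) = true. Proof. by []. Qed.

Lemma pdecP (P : Prop) : pdec P <-> P.
Proof. by rewrite /pdec; case: excluded_middle_informative. Qed.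

Section Chi.
Variables (K : comNzSemiRingType) (HK : positive_sr K).

Lemma chiK0 : chiK (0 : K) = 0. Proof. by rewrite /chiK eqxx. Qed.
Lemma chiK1 : chiK (1 : K) = 1. Proof. by rewrite /chiK oner_neq0. Qed.
Lemma chiKD (a b : K) : chiK (a + b) = chiK a + chiK b.
Proof.
rewrite /chiK addbsrE; have [->|ha] := eqVneq a 0; first by rewrite add0r.
by apply/negP => /eqP /HK.1 [/eqP]; rewrite (negbTE ha).
Qed.
Lemma chiKM (a b : K) : chiK (a * b) = chiK a * chiK b.
Proof.
rewrite /chiK mulbsrE; have [->|ha] := eqVneq a 0; first by rewrite mul0r eqxx.
have [->|hb] := eqVneq b 0; first by rewrite mulr0 eqxx.
by apply/negP => /eqP /HK.2 [/eqP|/eqP]; [rewrite (negbTE ha)|rewrite (negbTE hb)].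
Qed.
Lemma chiK_b2K (b : bool) : chiK (b2K K b) = b2K boolsr b.
Proof. by case: b; rewrite /b2K ?chiK1 ?chiK0. Qed.
Lemma chiK_eq0 (a : K) : (chiK a == 0) = (a == 0).
Proof. by rewrite /chiK zerobsrE; case: (a == 0). Qed.
Lemma chiK_sum (I : Type) (r : seq I) P (F : I -> K) :
  chiK (\sum_(i <- r | P i) F i) = \sum_(i <- r | P i) chiK (F i).
Proof. exact: (big_morph _ chiKD chiK0). Qed.
Lemma chiK_prod (I : Type) (r : seq I) P (F : I -> K) :
  chiK (\prod_(i <- r | P i) F i) = \prod_(i <- r | P i) chiK (F i).
Proof. exact: (big_morph _ chiKM chiK1). Qed.

Lemma natle_chi (a b : K) : nat_le a b -> nat_le (chiK a) (chiK b).
Proof. by move=> [c <-]; exists (chiK c); rewrite chiKD. Qed.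

Variables (sym : Type) (ar : sym -> nat) (A : finType)
          (rel : forall r : sym, (ar r).-tuple A -> bool)
          (k : nat) (X : k.-tuple A -> K).

Let cX := fun t => chiK (X t).

Lemma keval_fo (f : kform ar k) : is_fo f -> forall pol e,
  chiK (keval rel X pol f e) = keval rel cX pol f e.
Proof.
elim: f => [r xs p | xs p | x y p | | g IH | g IHg h IHh | g IHg h IHh
  | x g IH | x g IH | o g IHg h IHh] //= Hf pol e.
- by case: vals => [t|]; rewrite ?chiK_b2K ?chiK0.
- case: vals => [t|]; last by rewrite chiK0.
  by case: (p == pol); rewrite ?chiK_b2K // /cX chiK_eq0.
- by case: (e x) => [a|]; case: (e y) => [b|]; rewrite ?chiK_b2K ?chiK0.
- exact: IH.
- case/andP: Hf => Hg Hh.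
  by case: pol; rewrite ?chiKM ?chiKD IHg ?IHh.
- case/andP: Hf => Hg Hh.
  by case: pol; rewrite ?chiKM ?chiKD IHg ?IHh.
- by case: pol; rewrite ?chiK_prod ?chiK_sum; apply: eq_bigr => a _; rewrite IH.
- by case: pol; rewrite ?chiK_prod ?chiK_sum; apply: eq_bigr => a _; rewrite IH.
Qed.

Definition bimp (u v : boolsr) := u ==> v.

Lemma bimp_mul (a b c d : boolsr) : bimp a b -> bimp c d -> bimp (a * c) (b * d).
Proof. by rewrite /bimp !mulbsrE; case: a; case: b; case: c; case: d. Qed.
Lemma bimp_add (a b c d : boolsr) : bimp a b -> bimp c d -> bimp (a + c) (b + d).
Proof. by rewrite /bimp !addbsrE; case: a; case: b; case: c; case: d. Qed.

Lemma bimp_prod (r : seq A) (F G : A -> boolsr) : (forall a, bimp (F a) (G a)) ->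
  bimp (\prod_(a <- r) F a) (\prod_(a <- r) G a).
Proof.
move=> H; apply: (big_ind2 bimp) => // u1 u2 v1 v2.
by rewrite /bimp !mulbsrE; case: u1; case: u2; case: v1; case: v2.
Qed.
Lemma bimp_sum (r : seq A) (F G : A -> boolsr) : (forall a, bimp (F a) (G a)) ->
  bimp (\sum_(a <- r) F a) (\sum_(a <- r) G a).
Proof.
move=> H; apply: (big_ind2 bimp) => // u1 u2 v1 v2.
by rewrite /bimp !addbsrE; case: u1; case: u2; case: v1; case: v2.
Qed.

Lemma keval_frag1 (f : kform ar k) : frag1 f -> forall e,
  bimp (chiK (keval rel X true f e)) (keval rel cX true f e).
Proof.
rewrite /frag1.
elim: f => [r xs p | xs p | x y p | | g IH | g IHg h IHh | g IHg h IHh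
  | x g IH | x g IH | o g IHg h IHh];
  try by move=> _ e; rewrite /bimp keval_fo ?implybb.
all: move=> /= Hf e //=.
- case/andP: Hf => /IHg Hg /IHh Hh.
  by rewrite chiKM; apply: bimp_mul.
- case/andP: Hf => /IHg Hg /IHh Hh.
  by rewrite chiKD; apply: bimp_add.
- by rewrite chiK_prod; apply: bimp_prod => a; apply: IH.
- by rewrite chiK_sum; apply: bimp_sum => a; apply: IH.
- rewrite chiK_b2K /bimp /b2K.
  apply/implyP; case: ifP => // /pdecP HP _.
  rewrite (_ : pdec _ = true) //; apply/pdecP.
  move: Hf HP; case: o => //= /andP[Hg Hh].
  + by rewrite -(keval_fo Hg) -(keval_fo Hh) => ->.
  + case: h IHh Hh => //= _ _; rewrite /b2K /= => H.
    rewrite -(keval_fo Hg) zerobsrE => /negbT; rewrite /chiK.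
    by move=> /negPn /eqP.
  + by rewrite -(keval_fo Hg) -(keval_fo Hh) => /natle_chi.
Qed.

Lemma keval_frag2 (f : kform ar k) : frag2 f -> forall e,
  bimp (keval rel cX true f e) (chiK (keval rel X true f e)).
Proof.
rewrite /frag2.
elim: f => [r xs p | xs p | x y p | | g IH | g IHg h IHh | g IHg h IHh
  | x g IH | x g IH | o g IHg h IHh];
  try by move=> _ e; rewrite /bimp keval_fo ?implybb.
all: move=> /= Hf e //=.
- case/andP: Hf => /IHg Hg /IHh Hh.
  by rewrite chiKM; apply: bimp_mul.
- case/andP: Hf => /IHg Hg /IHh Hh.
  by rewrite chiKD; apply: bimp_add.
- by rewrite chiK_prod; apply: bimp_prod => a; apply: IH.
- by rewrite chiK_sum; apply: bimp_sum => a; apply: IH.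
- rewrite chiK_b2K /bimp /b2K.
  apply/implyP; case: ifP => // /pdecP HP _.
  rewrite (_ : pdec _ = true) //; apply/pdecP.
  move: Hf HP; case: o => //= /andP[Hg Hh].
  + case: h IHh Hh => //= _ _; rewrite /b2K /= => H.
    by move/eqP: H; rewrite -(keval_fo Hg) chiK_eq0 => /eqP.
  + by rewrite -(keval_fo Hg) -(keval_fo Hh) => H E; apply: H; rewrite E.
  + by rewrite -(keval_fo Hg) -(keval_fo Hh) => H /natle_chi.
Qed.
End Chi.

Lemma choice_fun (S T : Type) (Q : S -> T -> Prop) :
  (forall s, exists t, Q s t) -> exists f : S -> T, forall s, Q s (f s).
Proof.
move=> H; exists (fun s => proj1_sig (constructive_indefinite_description _ (H s))).
by move=> s; case: constructive_indefinite_description.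
Qed.

Lemma sum_bsr (I : Type) (l : seq I) (P : I -> bool) :
  \sum_(a <- l) (P a : boolsr) = has P l.
Proof. by elim: l => [|a l IH]; rewrite ?big_nil ?big_cons //= addbsrE IH. Qed.

Section Split.
Variables (K : comNzSemiRingType) (HK : positive_sr K) (Hd : plus_dense K).

Lemma split2 (c : K) (p q : bool) : (c != 0) = p || q ->
  exists y z : K, y + z = c /\ (y != 0) = p /\ (z != 0) = q.
Proof.
case: p; case: q => /= H.
- have [b [d [hb [hd ->]]]] := Hd H.
  by exists b, d; rewrite hb hd.
- by exists c, 0; rewrite addr0 H eqxx.
- by exists 0, c; rewrite add0r H eqxx.
- by exists 0, 0; rewrite addr0 eqxx; move/negbT/negPn/eqP: H.
Qed.

Lemma split_seq (I : eqType) (l : seq I) (P : I -> bool) : uniq l ->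
  forall c : K, (c != 0) = has P l ->
  exists f : I -> K, \sum_(a <- l) f a = c /\ forall a, a \in l -> (f a != 0) = P a.
Proof.
elim: l => [|a0 l IH] /= Hu c Hc.
  exists (fun _ => 0); rewrite big_nil; split => //.
  by move/negbT/negPn/eqP: Hc.
case/andP: Hu => a0l ul.
have [v [c' [Hvc [Hv Hc']]]] := split2 Hc.
have [f' [Hs Hm]] := IH ul c' Hc'.
exists (fun a => if a == a0 then v else f' a); split.
  rewrite big_cons eqxx -Hvc -Hs; congr (_ + _).
  apply: eq_big_seq => a al; case: eqP => // e.
  by move: a0l; rewrite -e al.
move=> a; rewrite inE; case: eqP => [->//|ne /= al].
exact: Hm.
Qed.
End Split.

Section Team.
Variables (K : comNzSemiRingType) (HK : positive_sr K).
Variables (sym : Type) (ar : sym -> nat) (At : Type) (avars : At -> seq nat)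
  (adef : At -> forall V : seq nat, kform ar (size V))
  (A : finType) (rel : forall r : sym, (ar r).-tuple A -> bool).

Lemma chiK_neq0 (a : K) : (chiK a != 0) = (a != 0).
Proof. by rewrite chiK_eq0. Qed.

Lemma part1 (C : At -> Prop)
  (HC : forall a, C a -> definable avars adef (@frag1 sym ar) a)
  (f : tform ar At) : atoms_in C f -> forall V, sorted ltn V -> wf avars V f ->
  forall X : assign A V -> K, tsat adef rel f X -> tsat adef rel f (collapse X).
Proof.
elim: f => [r xs p | x y p | a | g IHg h IHh | g IHg h IHh | x g IH | x g IH]
  /= HCf V sV Hwf X.
- by move=> H s; rewrite /collapse chiK_neq0; apply: H.
- by move=> H s; rewrite /collapse chiK_neq0; apply: H.
- move=> H.
  have F := keval_frag1 HK rel X (HC a HCf V sV Hwf) (fun _ => None).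
  move: F H; rewrite /bimp /sent_val /chiK => /implyP F /F.
  by rewrite /collapse /chiK; case: (keval _ _ _ _ _).
- case: HCf => Cg Ch; case: Hwf => Wg Wh [Hg Hh].
  by split; [apply: IHg | apply: IHh].
- case: HCf => Cg Ch; case: Hwf => Wg Wh [Y [Z [HYZ [Hg Hh]]]].
  exists (collapse Y), (collapse Z); split; last by split; [apply: IHg | apply: IHh].
  by move=> s; rewrite /collapse -chiKD // HYZ.
- case: Hwf => xV Wg [Y [HY Hg]].
  exists (collapse Y); split; last by apply: IH => //; apply: ins_sorted.
  by move=> s b; rewrite /collapse HY.
- case: Hwf => xV Wg [Y [HY Hg]].
  exists (collapse Y); split; last by apply: IH => //; apply: ins_sorted.
  by move=> s; rewrite /collapse HY chiK_sum.
Qed.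

Lemma part2 (Hd : plus_dense K) (D : At -> Prop)
  (HD : forall a, D a -> definable avars adef (@frag2 sym ar) a)
  (f : tform ar At) : atoms_in D f -> forall V, sorted ltn V -> wf avars V f ->
  forall X : assign A V -> K, tsat adef rel f (collapse X) -> tsat adef rel f X.
Proof.
elim: f => [r xs p | x y p | a | g IHg h IHh | g IHg h IHh | x g IH | x g IH]
  /= HCf V sV Hwf X.
- by move=> H s; rewrite -chiK_neq0; apply: H.
- by move=> H s; rewrite -chiK_neq0; apply: H.
- move=> H.
  have F := keval_frag2 HK rel X (HD a HCf V sV Hwf) (fun _ => None).
  move: F H; rewrite /bimp /sent_val /chiK => /implyP F H.
  apply: F; move: H; rewrite zerobsrE; by case: (keval _ _ _ _ _).
- case: HCf => Cg Ch; case: Hwf => Wg Wh [Hg Hh].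
  by split; [apply: IHg | apply: IHh].
- case: HCf => Cg Ch; case: Hwf => Wg Wh [Y' [Z' [HYZ [Hg Hh]]]].
  have [F HF] : exists F : assign A V -> K * K, forall s,
     (F s).1 + (F s).2 = X s /\ ((F s).1 != 0) = Y' s /\ ((F s).2 != 0) = Z' s.
    apply: (choice_fun (Q := fun s (p : K * K) =>
       p.1 + p.2 = X s /\ (p.1 != 0) = Y' s /\ (p.2 != 0) = Z' s)) => s.
    have := HYZ s; rewrite addbsrE /collapse /chiK => E.
    have [y [z [H1 [H2 H3]]]] := split2 Hd (esym E).
    by exists (y, z).
  exists (fun s => (F s).1), (fun s => (F s).2); split; first by move=> s; case: (HF s).
  split.
  + apply: IHg => //; suff -> : collapse (fun s => (F s).1) = Y' by [].
    by apply: functional_extensionality => s; case: (HF s) => _ [].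
  + apply: IHh => //; suff -> : collapse (fun s => (F s).2) = Z' by [].
    by apply: functional_extensionality => s; case: (HF s) => _ [].
- case: Hwf => xV Wg [Y' [HY Hg]].
  exists (fun t => X (proj t)); split.
    by move=> s b; rewrite proj_ext.
  apply: IH => //; first exact: ins_sorted.
  suff -> : collapse (fun t => X (proj t)) = Y' by [].
  apply: functional_extensionality => t.
  by rewrite -{2}(ext_proj sV t) HY.
- case: Hwf => xV Wg [Y' [HY Hg]].
  have [F HF] : exists F : assign A V -> A -> K, forall s,
     \sum_(a <- index_enum A) F s a = X s /\
     forall a, a \in index_enum A -> (F s a != 0) = Y' (ext x s a).
    apply: (choice_fun (Q := fun s (G : A -> K) =>
       \sum_(a <- index_enum A) G a = X s /\
       forall a, a \in index_enum A -> (G a != 0) = Y' (ext x s a))) => s.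
    apply: split_seq => //; first exact: index_enum_uniq.
    by have := HY s; rewrite /collapse /chiK => ->; rewrite sum_bsr.
  exists (fun t => F (proj t) (a_of t)); split.
    move=> s; case: (HF s) => <- _; apply: eq_bigr => a _.
    by rewrite proj_ext // a_of_ext.
  apply: IH => //; first exact: ins_sorted.
  suff -> : collapse (fun t => F (proj t) (a_of t)) = Y' by [].
  apply: functional_extensionality => t.
  rewrite /collapse /chiK; case: (HF (proj t)) => _ ->; last exact: mem_index_enum.
  by rewrite ext_proj.
Qed.
End Team.

Theorem mainTheorem6
  (K : comNzSemiRingType) (HKpos : positive_sr K)
  (sym : Type) (ar : sym -> nat)
  (At : Type) (avars : At -> seq nat)
  (adef : At -> forall V : seq nat, kform ar (size V))
  (C D : At -> Prop)
  (HC : forall a, C a -> definable avars adef (@frag1 sym ar) a)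
  (HD : forall a, D a -> definable avars adef (@frag2 sym ar) a)
  (phi psi : tform ar At) (HphiC : atoms_in C phi) (HpsiD : atoms_in D psi)
  (A : finType) (rel : forall r : sym, (ar r).-tuple A -> bool)
  (V : seq nat) (HV : sorted ltn V)
  (X : assign A V -> K) :
  (wf avars V phi ->
     tsat adef rel phi X -> tsat adef rel phi (collapse X)) /\
  (plus_dense K -> wf avars V psi ->
     tsat adef rel psi (collapse X) -> tsat adef rel psi X).
Proof.
split.
- by move=> W; apply: (part1 HKpos HC HphiC HV W).
- by move=> Hd W; apply: (part2 HKpos Hd HD HpsiD HV W).
Qed.
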